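(* For every oriented diagram $D$ with double lines of degree $0$, $pr_{wp}(pr_{wp}(D))=pr_{wp}(D)$.
   Context: A diagram with double lines (representing a knot in $S_g\times S^1$, $S_g$ a closed oriented surface) is a virtual knot diagram in the plane decorated by finitely many double lines, marks on the curve away from crossings recording where the knot meets a fixed level $S_g\times\{x_0\}$; for an oriented diagram each double line has a sign $\pm1$ according to the direction in which the knot passes through that level. The degree is the sum of the signs of all double lines. For a classical crossing $c$, $\gamma_c$ is the closed path following the oriented curve from $c$, leaving along the under-strand, until it first returns to $c$; the winding parity of $c$ is the sum of the signs of the double lines on $\gamma_c$ (an integer in degree $0$). For a degree-$0$ diagram $D$, $pr_{wp}(D)$ is obtained as follows: for each classical crossing $c$ with winding parity $i$, if $i\ge0$ keep $c$ and put $j=i$; if $i<0$ switch over/under at $c$ and put $j=-i$; then on the under-strand of the resulting crossing insert $j$ double lines of sign $-1$ immediately after $c$ and $j$ double lines of sign $+1$ immediately before $c$. *)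

(* Defs.v *)
From mathcomp Require Import all_boot all_order all_algebra.
Set Implicit Arguments. Unset Strict Implicit. Unset Printing Implicit Defensive.
Import Order.TTheory GRing.Theory Num.Theory.
Local Open Scope ring_scope.

(* An event met when travelling along the oriented knot (from a base point):
   - [Pass c over sgn]: passage through classical crossing [c] along its
     over-strand ([over = true]) or under-strand ([over = false]);
     [sgn] is the local sign (writhe) of crossing [c] (true = +1, false = -1);
   - [DL s]: a double line of sign +1 ([s = true]) or -1 ([s = false]).
   Virtual crossings are not recorded (Gauss-code model of virtual diagrams). *)
Inductive event : Type :=
  | Pass of nat & bool & bool
  | DL of bool.

(* An oriented diagram with double lines: the cyclic word of events read along
   the oriented curve starting from a base point. *)
Definition diagram := seq event.

Definition is_pass (c : nat) (over : bool) (e : event) : bool :=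
  match e with
  | Pass d o _ => (d == c) && (o == over)
  | DL _ => false
  end.

Definition pass_eq (c : nat) (over sgn : bool) (e : event) : bool :=
  match e with
  | Pass d o b => [&& d == c, o == over & b == sgn]
  | DL _ => false
  end.

Definition wf_diagram (D : diagram) : Prop :=
  (forall c : nat,
      count (is_pass c true) D = count (is_pass c false) D /\
      (count (is_pass c true) D <= 1)%N) /\
  (forall (c : nat) (o1 o2 b1 b2 : bool),
      has (pass_eq c o1 b1) D -> has (pass_eq c o2 b2) D -> b1 = b2).

Definition dl_sign (e : event) : int :=
  match e with
  | DL true => 1
  | DL false => -1
  | Pass _ _ _ => 0
  end.

Definition sum_dl (s : seq event) : int := \sum_(e <- s) dl_sign e.

Definition degree (D : diagram) : int := sum_dl D.

(* gamma_c: the path from c, leaving along the under-strand, following the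
   orientation (cyclically) until the first return to c (the over passage). *)
Definition gamma (D : diagram) (c : nat) : seq event :=
  let u := find (is_pass c false) D in
  let r := rot u.+1 D in
  take (find (is_pass c true) r) r.

Definition winding_parity (D : diagram) (c : nat) : int := sum_dl (gamma D c).

Definition pr_wp_event (D : diagram) (e : event) : seq event :=
  match e with
  | DL s => [:: DL s]
  | Pass c o b =>
      let i := winding_parity D c in
      let o' := if 0 <= i then o else ~~ o in
      let b' := if 0 <= i then b else ~~ b in
      let j := `|i|%N in
      if o' then [:: Pass c o' b']
      else nseq j (DL true) ++ Pass c o' b' :: nseq j (DL false)
  end.

Definition pr_wp (D : diagram) : diagram := flatten (map (pr_wp_event D) D).

(* Main.v *)
Require Import Defs.
From mathcomp Require Import all_boot all_order all_algebra zify.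
Import GRing.Theory Num.Theory.
Local Open Scope ring_scope.

Definition cfree (c : nat) (e : event) : bool :=
  if e is Pass d _ _ then d != c else true.

Lemma nohas c o A : all (cfree c) A -> ~~ has (is_pass c o) A.
Proof.
elim: A => //= e A IH /andP[h hA]; rewrite negb_or IH // andbT.
by case: e h => //= d o' b /negbTE ->.
Qed.

Lemma sum_dl_cat s t : sum_dl (s ++ t) = sum_dl s + sum_dl t.
Proof. by rewrite /sum_dl big_cat. Qed.
Lemma sum_dl_cons x s : sum_dl (x :: s) = dl_sign x + sum_dl s.
Proof. by rewrite /sum_dl big_cons. Qed.
Lemma sum_dl_nseq n x : sum_dl (nseq n x) = dl_sign x *+ n.
Proof. elim: n => [|n IH]; first by rewrite /sum_dl big_nil.
by rewrite /= sum_dl_cons IH mulrS. Qed.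

Lemma gamma_gen c P b s : ~~ has (is_pass c false) P ->
  gamma (P ++ Pass c false b :: s) c =
  take (find (is_pass c true) (s ++ rcons P (Pass c false b)))
       (s ++ rcons P (Pass c false b)).
Proof.
move=> hP; rewrite /gamma find_cat (negbTE hP) /= !eqxx /= addn0.
by rewrite -cat_rcons -(size_rcons P (Pass c false b)) rot_size_cat.
Qed.

Lemma gamma1 c A B C b1 b2 : all (cfree c) A -> all (cfree c) B -> all (cfree c) C ->
  gamma (A ++ Pass c false b1 :: B ++ Pass c true b2 :: C) c = B.
Proof.
move=> hA hB hC; rewrite gamma_gen ?nohas // -catA find_cat (negbTE (nohas _ _ _ hB)) /= !eqxx /=.
by rewrite addn0 take_size_cat.
Qed.

Lemma gamma2 c A B C b1 b2 : all (cfree c) A -> all (cfree c) B -> all (cfree c) C ->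
  gamma (A ++ Pass c true b1 :: B ++ Pass c false b2 :: C) c = C ++ A.
Proof.
move=> hA hB hC.
have -> : A ++ Pass c true b1 :: B ++ Pass c false b2 :: C =
          (A ++ Pass c true b1 :: B) ++ Pass c false b2 :: C by rewrite -catA.
rewrite gamma_gen; last by rewrite has_cat negb_or (nohas _ _ _ hA) /= andbF (nohas _ _ _ hB).
have hCA : all (cfree c) (C ++ A) by rewrite all_cat hC hA.
rewrite rcons_cat /= catA find_cat (negbTE (nohas _ _ _ hCA)) /= !eqxx /=.
by rewrite addn0 take_size_cat.
Qed.

Lemma wp1 c X A B C b1 b2 :
  X = A ++ Pass c false b1 :: B ++ Pass c true b2 :: C ->
  all (cfree c) A -> all (cfree c) B -> all (cfree c) C ->
  winding_parity X c = sum_dl B.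
Proof. by move=> -> hA hB hC; rewrite /winding_parity gamma1. Qed.

Lemma wp2 c X A B C b1 b2 :
  X = A ++ Pass c true b1 :: B ++ Pass c false b2 :: C ->
  all (cfree c) A -> all (cfree c) B -> all (cfree c) C ->
  winding_parity X c = sum_dl C + sum_dl A.
Proof. by move=> -> hA hB hC; rewrite /winding_parity gamma2 // sum_dl_cat. Qed.

Lemma img_free c D X : all (cfree c) X ->
  all (cfree c) (flatten (map (pr_wp_event D) X)).
Proof.
elim: X => //= e X IH /andP[he hX]; rewrite all_cat IH // andbT.
case: e he => [d o b|s] //= hd; case: ifP => _ /=; rewrite ?all_cat /= ?all_nseq /= ?orbT ?hd //.
Qed.

Lemma img_sum D X : sum_dl (flatten (map (pr_wp_event D) X)) = sum_dl X.
Proof.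
elim: X => [|e X IH] //=; rewrite sum_dl_cat IH sum_dl_cons; congr (_ + _).
case: e => [d o b|s] /=; last by rewrite sum_dl_cons /sum_dl big_nil addr0.
case: ifP => _; first by rewrite sum_dl_cons /sum_dl big_nil.
rewrite sum_dl_cat sum_dl_cons !sum_dl_nseq /= add0r mulNrn.
by rewrite subrr.
Qed.

Lemma img_cat D X Y : flatten (map (pr_wp_event D) (X ++ Y)) =
  flatten (map (pr_wp_event D) X) ++ flatten (map (pr_wp_event D) Y).
Proof. by rewrite map_cat flatten_cat. Qed.

Lemma deg_split c A B C b1 b2 o1 o2 :
  degree (A ++ Pass c o1 b1 :: B ++ Pass c o2 b2 :: C) = sum_dl A + sum_dl B + sum_dl C.
Proof. by rewrite /degree !(sum_dl_cat, sum_dl_cons) /= !add0r addrA. Qed.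

Lemma case1 c A B C b1 b2 :
  all (cfree c) A -> all (cfree c) B -> all (cfree c) C ->
  degree (A ++ Pass c false b1 :: B ++ Pass c true b2 :: C) = 0 ->
  winding_parity (pr_wp (A ++ Pass c false b1 :: B ++ Pass c true b2 :: C)) c = 0.
Proof.
move=> hA hB hC; rewrite deg_split => hdeg.
set D := A ++ _.
have hi : winding_parity D c = sum_dl B by apply: wp1.
rewrite /pr_wp {2}/D !img_cat /= !img_cat /= hi.
set F := fun X => flatten (map (pr_wp_event D) X).
have fA : all (cfree c) (F A) by apply: img_free.
have fB : all (cfree c) (F B) by apply: img_free.
have fC : all (cfree c) (F C) by apply: img_free.
have [hpos|hneg] := boolP (0 <= sum_dl B); rewrite ?hpos ?(negbTE hneg) /=.
- rewrite (@wp1 c _ (F A ++ nseq `|sum_dl B|%N (DL true)) (nseq `|sum_dl B|%N (DL false) ++ F B) (F C) b1 b2).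
  + by rewrite sum_dl_cat sum_dl_nseq img_sum /= mulNrn natz; lia.
  + by rewrite -!catA.
  + by rewrite all_cat fA all_nseq orbT.
  + by rewrite all_cat fB all_nseq orbT.
  + done.
- rewrite (@wp2 c _ (F A) (F B ++ nseq `|sum_dl B|%N (DL true)) (nseq `|sum_dl B|%N (DL false) ++ F C) (~~ b1) (~~ b2)).
  + rewrite sum_dl_cat sum_dl_nseq !img_sum /= mulNrn natz; lia.
  + by rewrite -!catA.
  + done.
  + by rewrite all_cat fB all_nseq orbT.
  + by rewrite all_cat fC all_nseq orbT.
Qed.

Lemma case2 c A B C b1 b2 :
  all (cfree c) A -> all (cfree c) B -> all (cfree c) C ->
  degree (A ++ Pass c true b1 :: B ++ Pass c false b2 :: C) = 0 ->
  winding_parity (pr_wp (A ++ Pass c true b1 :: B ++ Pass c false b2 :: C)) c = 0.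
Proof.
move=> hA hB hC; rewrite deg_split => hdeg.
set D := A ++ _.
have hi : winding_parity D c = sum_dl C + sum_dl A by apply: wp2.
rewrite /pr_wp {2}/D !img_cat /= !img_cat /= hi.
set F := fun X => flatten (map (pr_wp_event D) X).
have fA : all (cfree c) (F A) by apply: img_free.
have fB : all (cfree c) (F B) by apply: img_free.
have fC : all (cfree c) (F C) by apply: img_free.
have [hpos|hneg] := boolP (0 <= sum_dl C + sum_dl A); rewrite ?hpos ?(negbTE hneg) /=.
- rewrite (@wp2 c _ (F A) (F B ++ nseq `|(sum_dl C + sum_dl A)%R|%N (DL true)) (nseq `|(sum_dl C + sum_dl A)%R|%N (DL false) ++ F C) b1 b2).
  + rewrite sum_dl_cat sum_dl_nseq !img_sum /= mulNrn natz; lia.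
  + by rewrite -!catA.
  + done.
  + by rewrite all_cat fB all_nseq orbT.
  + by rewrite all_cat fC all_nseq orbT.
- rewrite (@wp1 c _ (F A ++ nseq `|(sum_dl C + sum_dl A)%R|%N (DL true)) (nseq `|(sum_dl C + sum_dl A)%R|%N (DL false) ++ F B) (F C) (~~ b1) (~~ b2)).
  + rewrite sum_dl_cat sum_dl_nseq img_sum /= mulNrn natz; lia.
  + by rewrite -!catA.
  + by rewrite all_cat fA all_nseq orbT.
  + by rewrite all_cat fB all_nseq orbT.
  + done.
Qed.

Lemma split_one (p : pred event) s : count p s = 1%N ->
  exists A x B, s = A ++ x :: B /\ p x /\ ~~ has p A /\ ~~ has p B.
Proof.
elim: s => [|x s IH] //=.
case px: (p x) => /= h.
- exists [::], x, s; split=> //; split=> //; split=> //.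
  by rewrite has_count; move: h; case: (count p s).
- have [A [y [B [-> [py [hA hB]]]]]] := IH h.
  by exists (x :: A), y, B; rewrite /= px.
Qed.

Lemma free_of c X : ~~ has (is_pass c true) X -> ~~ has (is_pass c false) X ->
  all (cfree c) X.
Proof.
elim: X => //= e X IH; rewrite !negb_or => /andP[h1 h2] /andP[h3 h4].
rewrite IH // andbT; case: e h1 h3 => //= d o b.
by case: o; rewrite /= ?andbT ?andbF ?eqxx //= ?andbT => h; rewrite ?h.
Qed.

Lemma wp_zero D c o : wf_diagram D -> degree D = 0 ->
  (0 < count (is_pass c o) D)%N -> winding_parity (pr_wp D) c = 0.
Proof.
move=> [hwf _] hdeg hc.
have [e1 e2] := hwf c.
have h1 : count (is_pass c true) D = 1%N by case: o hc; lia.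
have h0 : count (is_pass c false) D = 1%N by lia.
have [A [U [B [hD [hU [hA hB]]]]]] := split_one _ _ h0.
case: U hD hU => [d u b1|s] hD //= /andP[/eqP hd /eqP hu]; subst d u.
move: h1; rewrite hD count_cat /= !eqxx /= add0n => hcnt.
case hcA: (count (is_pass c true) A) => [|k].
- rewrite hcA add0n in hcnt.
  have [B1 [O [B2 [hB' [hO [hB1 hB2]]]]]] := split_one _ _ hcnt.
  case: O hB' hO => [d u b2|s] hB' //= /andP[/eqP hd /eqP hu]; subst d u.
  have hAf : all (cfree c) A by apply: free_of => //; rewrite has_count hcA.
  move: hB; rewrite hB' has_cat negb_or /= => /andP[hB1' hB2'].
  rewrite andbF /= in hB2'.
  move: hdeg; rewrite hD hB' => hdeg.
  by apply: case1 => //; apply: free_of.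
- have hA1 : count (is_pass c true) A = 1%N by lia.
  have hB0 : count (is_pass c true) B = 0%N by lia.
  have [A1 [O [A2 [hA' [hO [hA1' hA2']]]]]] := split_one _ _ hA1.
  case: O hA' hO => [d u b2|s] hA' //= /andP[/eqP hd /eqP hu]; subst d u.
  have hBf : all (cfree c) B by apply: free_of => //; rewrite has_count hB0.
  move: hA; rewrite hA' has_cat negb_or /= => /andP[hA1'' hA2''].
  rewrite andbF /= in hA2''.
  move: hdeg; rewrite hD hA' -catA /= => hdeg.
  by apply: case2 => //; apply: free_of.
Qed.

Definition passQ (Q : nat -> bool) (e : event) : bool :=
  if e is Pass c _ _ then Q c else true.

Lemma passQ_img Q E X : all (passQ Q) X ->
  all (passQ Q) (flatten (map (pr_wp_event E) X)).
Proof.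
elim: X => //= e X IH /andP[he hX]; rewrite all_cat IH // andbT.
case: e he => [d o b|s] //= hd; case: ifP => _ /=; rewrite ?all_cat /= ?all_nseq /= ?hd ?orbT //.
Qed.

Lemma passQ_count (Q : nat -> bool) X : (forall c o, (0 < count (is_pass c o) X)%N -> Q c) ->
  all (passQ Q) X.
Proof.
elim: X => //= e X IH h; apply/andP; split.
- case: e h => //= c o b h; apply: (h c o); rewrite !eqxx /=; lia.
- apply: IH => c o hc; apply: (h c o); lia.
Qed.

Lemma fix_img E X : all (passQ (fun c => winding_parity E c == 0)) X ->
  flatten (map (pr_wp_event E) X) = X.
Proof.
elim: X => //= e X IH /andP[he hX]; rewrite IH //.
case: e he => [c o b|s] //= /eqP ->; by case: o.
Qed.

Theorem mainTheorem3 (D : diagram) :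
  wf_diagram D -> degree D = 0 -> pr_wp (pr_wp D) = pr_wp D.
Proof.
move=> hwf hdeg; rewrite {1}/pr_wp; apply: fix_img.
apply: passQ_img; apply: passQ_count => c o hc.
by apply/eqP; apply: (wp_zero _ _ _ hwf hdeg hc).
Qed.
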